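(* In the setting of the context, let $\omega=i\omega_\Im$ with $\omega_\Im\in\mathbb{R}$ and $\omega\notin\{0,\delta_+,\delta_-\}$. Then $\omega\in W_\Omega(T)$ if and only if at least one of the following holds: $$-\omega_\Im^2-\frac{\omega_\Im^2}{c+d\omega_\Im+\omega_\Im^2}\inf W(B)\in\overline{W(A)},\qquad -\omega_\Im^2-\frac{\omega_\Im^2}{c+d\omega_\Im+\omega_\Im^2}\sup W(B)\in\overline{W(A)},$$ $$-\frac{c+d\omega_\Im+\omega_\Im^2}{\omega_\Im^2}\bigl(\omega_\Im^2+\inf W(A)\bigr)\in\overline{W(B)}.$$
   Context: Let $\mathcal{H}$ be a Hilbert space, $A$ a selfadjoint (possibly unbounded) operator in $\mathcal{H}$ and $B$ a nonzero bounded selfadjoint operator. Let $c\ge0$, $d>0$, $\delta_\pm:=\pm\sqrt{c-d^2/4}-id/2$ (principal square root). $W(A),W(B)\subset\mathbb{R}$ are the numerical ranges. For real $\alpha,\beta$ let $p_{(\alpha,\beta)}(\omega):=(\alpha-\omega^2)(c-id\omega-\omega^2)-\beta\omega^2$ with roots $r_1,\dots,r_4$ labelled continuously in $(\alpha,\beta)$ and extended by limits to $\overline{\mathbb{R}}\times\mathbb{R}$ ($\overline{\mathbb{R}}=\mathbb{R}\cup\{\pm\infty\}$), values in $\overline{\mathbb{C}}=\mathbb{C}\cup\{\infty\}$. Let $\Omega:=\overline{W(A)}\times\overline{W(B)}$ (closure of $W(A)$ in $\overline{\mathbb{R}}$) and $W_\Omega(T):=\bigcup_{n=1}^4\bigcup_{(\alpha,\beta)\in\Omega}r_n(\alpha,\beta)$.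 *)

(* Defs.v *)
From mathcomp Require Import all_boot all_order all_algebra.
From mathcomp Require Import all_classical all_reals all_analysis.
From mathcomp Require Import complex.
Import Order.TTheory GRing.Theory Num.Theory.
Import numFieldNormedType.Exports.
Local Open Scope classical_set_scope.
Local Open Scope ring_scope.
Local Open Scope complex_scope.

Set Implicit Arguments.
Unset Strict Implicit.
Unset Printing Implicit Defensive.

Section Defs.
Variable R : realType.

Variable V : lmodType R[i].
Variable ip : V -> V -> R[i].

Definition hnorm (x : V) : R := Num.sqrt (complex.Re (ip x x)).

Definition is_hilbert_space : Prop :=
  [/\ (forall (a : R[i]) (x y z : V), ip (a *: x + y) z = a * ip x z + ip y z),
      (forall x y : V, ip y x = (ip x y)^*),
      (forall x : V, x != 0 -> 0 < ip x x) &
      (forall u : nat -> V,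
         (forall e : R, 0 < e -> exists N : nat, forall m n : nat,
              (N <= m)%N -> (N <= n)%N -> hnorm (u m - u n) < e) ->
         exists l : V, forall e : R, 0 < e -> exists N : nat, forall n : nat,
              (N <= n)%N -> hnorm (u n - l) < e)].

(* y in dom(A^adj) with A^adj y = z  iff  y in D and A y = z. *)
Definition is_selfadjoint (D : set V) (A : V -> V) : Prop :=
  [/\ D 0,
      (forall (a : R[i]) (x y : V), D x -> D y -> D (a *: x + y)),
      (forall (a : R[i]) (x y : V), D x -> D y -> A (a *: x + y) = a *: A x + A y),
      (forall (x : V) (e : R), 0 < e -> exists y : V, D y /\ hnorm (x - y) < e) &
      (forall y z : V, (forall x : V, D x -> ip (A x) y = ip x z) <-> (D y /\ A y = z))].

Definition is_bounded_selfadjoint (B : V -> V) : Prop :=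
  [/\ (forall (a : R[i]) (x y : V), B (a *: x + y) = a *: B x + B y),
      (exists M : R, forall x : V, hnorm (B x) <= M * hnorm x) &
      (forall x y : V, ip (B x) y = ip x (B y))].

(* Numerical range W(A) = { <Ax,x> : x \in dom A, ||x|| = 1 }, which is
   real for symmetric A; we record it as a subset of R. *)
Definition numrange (D : set V) (A : V -> V) : set R :=
  [set r : R | exists x : V, [/\ D x, ip x x = 1 & ip (A x) x = r%:C]].

End Defs.

Definition eclosure (R : realType) (S : set R) : set (\bar R) :=
  closure [set x%:E | x in S].

Definition einf (R : realType) (S : set R) : \bar R := ereal_inf [set x%:E | x in S].
Definition esup (R : realType) (S : set R) : \bar R := ereal_sup [set x%:E | x in S].

Definition psqrt (R : realType) (x : R) : R[i] :=
  if 0 <= x then (Num.sqrt x)%:C else 'i * (Num.sqrt (- x))%:C.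

Definition delta_p (R : realType) (c d : R) : R[i] :=
  psqrt (c - d ^+ 2 / 4%:R) - 'i * (d / 2%:R)%:C.
Definition delta_m (R : realType) (c d : R) : R[i] :=
  - psqrt (c - d ^+ 2 / 4%:R) - 'i * (d / 2%:R)%:C.

Definition pab (R : realType) (c d alpha beta : R) (w : R[i]) : R[i] :=
  (alpha%:C - w ^+ 2) * (c%:C - 'i * d%:C * w - w ^+ 2) - beta%:C * w ^+ 2.

(* Extended complex plane: Some z = z \in C, None = infinity.
   Convergence of a complex sequence to a point of the extended plane. *)
Definition cvg_ext (R : realType) (w : nat -> R[i]) (z : option R[i]) : Prop :=
  match z with
  | Some z0 => forall e : R, 0 < e -> exists N : nat, forall k : nat,
                 (N <= k)%N -> `|w k - z0| < e%:C
  | None => forall M : R, exists N : nat, forall k : nat,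
                 (N <= k)%N -> M%:C < `|w k|
  end.

(* r is a value r_n(alpha, beta) of one of the (continuously labelled)
   roots of p_(alpha,beta), extended by limits to alpha = +-oo:
   r is a limit (in the extended plane) of roots w_k of p_(a_k,b_k) with
   (a_k, b_k) -> (alpha, beta) in \bar R x R. *)
Definition root_value (R : realType) (c d : R) (alpha : \bar R) (beta : R)
    (r : option R[i]) : Prop :=
  exists (a b : nat -> R) (w : nat -> R[i]),
    [/\ (fun k => (a k)%:E) @ \oo --> alpha,
        b @ \oo --> beta,
        (forall k, pab c d (a k) (b k) (w k) = 0) &
        cvg_ext w r].

Definition WOmega (R : realType) (c d : R) (WA WB : set R) : set (option R[i]) :=
  [set r | exists (alpha : \bar R) (beta : R),
       [/\ eclosure WA alpha, closure WB beta & root_value c d alpha beta r]].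

(* Main.v *)
Require Import Defs.
From mathcomp Require Import all_boot all_order all_algebra.
From mathcomp Require Import all_classical all_reals all_analysis.
From mathcomp Require Import complex.
Import Order.TTheory GRing.Theory Num.Theory.
Import numFieldNormedType.Exports.
Local Open Scope classical_set_scope.
Local Open Scope ring_scope.
Local Open Scope complex_scope.
From mathcomp Require Import ring lra.
Lemma cvg_ext_ReIm (R : realType) (w : nat -> R[i]) (t : R) :
  cvg_ext w (Some ('i * t%:C)) ->
  (fun n => complex.Re (w n)) @ \oo --> (0:R) /\
  (fun n => complex.Im (w n)) @ \oo --> t.
Proof.
move=> hw; split; apply/cvgrPdist_lt => e e0; have [N hN] := hw e e0;
  exists N => // n /= /hN; case: (w n) => u v /=;
  rewrite normc_def ltcR /=; simpc => /=; apply: le_lt_trans.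
- rewrite normrN -sqrtr_sqr ler_sqrt; last by rewrite addr_ge0 // sqr_ge0.
  by rewrite -[X in X <= _]addr0 lerD2l sqr_ge0.
- rewrite -normrN opprB -sqrtr_sqr ler_sqrt; last by rewrite addr_ge0 // sqr_ge0.
  by rewrite -[X in X <= _]add0r lerD2r sqr_ge0.
Qed.
Lemma pab_it (R : realType) (c d x b t : R) :
  pab c d x b ('i * t%:C) = ((x + t^+2) * (c + d*t + t^+2) + b * t^+2)%:C.
Proof.
rewrite /pab; apply/eqP; rewrite eq_complex /=; simpc; rewrite /=.
by [].
Qed.

Lemma Re_pab (R : realType) (c d a b u v : R) :
  complex.Re (pab c d a b (u +i* v)) = a * (c + d*v - u^+2 + v^+2) +
   ((- u^+2 + v^+2) * (c + d*v - u^+2 + v^+2) + 2*u*v*(-d*u - 2*u*v) - b*(u^+2 - v^+2)).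
Proof.
rewrite /pab; simpc; rewrite /=. ring.
Qed.
Lemma closureRP (R : realType) (S : set R) x :
  closure S x <-> forall e : R, 0 < e -> exists2 y, S y & `|x - y| < e.
Proof.
split.
- move=> H e e0; have [y [Sy By]] := H _ (nbhsx_ballx x e e0).
  by exists y.
- move=> H B /nbhs_ballP [e e0 He]; have [y Sy hy] := H e e0.
  by exists y; split => //; apply: He.
Qed.

Lemma eclosureP (R : realType) (S : set R) x :
  eclosure S x%:E <-> closure S x.
Proof.
split.
- move=> H B hB.
  have : nbhs x%:E (fun y : \bar R => B (fine y) /\ y \is a fin_num).
    by apply/nbhs_EFin; apply: filterS hB => z Bz; split.
  move=> /H [_ [[s Ss <-] [Bs _]]]; by exists s.
- move=> H B /nbhs_EFin hB.
  have [s [Ss Bs]] := H _ hB; exists s%:E; split => //; by exists s.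
Qed.

Lemma womegaP (R : realType) (c d : R) (WA WB : set R) (t : R) :
  c + d * t + t ^+ 2 != 0 ->
  WOmega c d WA WB (Some ('i * t%:C)) <->
  exists x b, [/\ closure WA x, closure WB b &
     (x + t^+2) * (c + d * t + t^+2) + b * t^+2 = 0].
Proof.
set kk := c + d * t + t ^+ 2 => kk0; split.
- move=> [alpha [beta [hA hB [a [b [w [ha hb hp hw]]]]]]].
  have [hu hv] := @cvg_ext_ReIm _ _ _ hw.
  set u := fun n => complex.Re (w n); set v := fun n => complex.Im (w n).
  set Kr := fun n => c + d * v n - u n ^+ 2 + v n ^+ 2.
  set S := fun n => (- u n ^+ 2 + v n ^+ 2) * (c + d * v n - u n ^+ 2 + v n ^+ 2)
       + 2 * u n * v n * (- d * u n - 2 * u n * v n) - b n * (u n ^+ 2 - v n ^+ 2).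
  have hK : Kr @ \oo --> c + d * t - 0 ^+ 2 + t ^+ 2.
    apply: cvgD; [apply: cvgB; [apply: cvgD; [exact: cvg_cst|apply: cvgM => //; exact: cvg_cst]|exact: cvgM]|exact: cvgM].
  have hS : S @ \oo --> (- 0 ^+ 2 + t ^+ 2) * (c + d * t - 0 ^+ 2 + t ^+ 2)
       + 2 * 0 * t * (- d * 0 - 2 * 0 * t) - beta * (0 ^+ 2 - t ^+ 2).
    apply: cvgB; last by apply: cvgM => //; apply: cvgB; exact: cvgM.
    apply: cvgD; first apply: cvgM => //; first by apply: cvgD; [apply: cvgN|]; exact: cvgM.
    apply: cvgM; last by apply: cvgB; [apply: cvgM; [exact: cvg_cst|]|]; do ?[apply: cvgM]; rewrite ?mulNr; do ?[apply: cvgN|apply: cvgM|exact: cvg_cst] => //.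
    do ?[apply: cvgM|exact: cvg_cst] => //.
  have hRe : forall n, a n * Kr n + S n = 0.
    move=> n; have := congr1 (@complex.Re R) (hp n).
    have -> : w n = (u n) +i* (v n) by rewrite /u /v; case: (w n).
    by rewrite Re_pab.
  have hK' : Kr @ \oo --> kk by move: hK; rewrite expr2 mulr0 subr0.
  have eS : (- 0 ^+ 2 + t ^+ 2) * (c + d * t - 0 ^+ 2 + t ^+ 2)
       + 2 * 0 * t * (- d * 0 - 2 * 0 * t) - beta * (0 ^+ 2 - t ^+ 2)
       = t ^+ 2 * kk + beta * t ^+ 2 :> R by rewrite /kk; ring.
  rewrite eS in hS.
  have ev : \forall n \near \oo, Kr n != 0.
    move/cvgrPdist_lt : hK' => /(_ `|kk|); rewrite normr_gt0 => /(_ kk0).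
    apply: filterS => n hn; apply/eqP => K0; move: hn; rewrite K0 subr0 ltxx.
    by [].
  have hlim : (fun n => - S n / Kr n) @ \oo --> - (t ^+ 2 * kk + beta * t ^+ 2) / kk.
    by apply: cvgM; [apply: cvgN|apply: cvgV].
  have ha' : a @ \oo --> - (t ^+ 2 * kk + beta * t ^+ 2) / kk.
    apply: cvg_trans hlim; apply: near_eq_cvg; apply: filterS ev => n hn.
    have := hRe n; move/(congr1 (fun z => z / Kr n)).
    rewrite mul0r mulrDl mulfK // => h.
    by apply/eqP; rewrite eq_sym -subr_eq0 mulNr opprK h.
  set x0 := - (t ^+ 2 * kk + beta * t ^+ 2) / kk in ha'.
  have hE : (fun n => (a n)%:E) @ \oo --> x0%:E.
    by apply: cvg_EFin; [apply: nearW => n|].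
  have ax : alpha = x0%:E by apply: (cvg_unique _ ha hE).
  exists x0, beta; split => //; first by move: hA; rewrite ax => /eclosureP.
  rewrite /x0; field; done.
- move=> [x [b [hx hb he]]].
  exists x%:E, b; split => //; first exact/eclosureP.
  exists (fun _ => x), (fun _ => b), (fun _ => 'i * t%:C); split.
  + exact: cvg_cst.
  + exact: cvg_cst.
  + by move=> _; rewrite pab_it he.
  + by move=> e e0; exists 0%N => k _; rewrite subrr normr0 ltcR.
Qed.

Lemma distP (R : realType) (x y e : R) : `|x - y| < e -> x - e < y /\ y < x + e.
Proof. by rewrite ltr_distlC => /andP. Qed.

Lemma eclosure_fin {R : realType} {S : set R} {K : R} {y} :
  (forall s, S s -> `|s| <= K) -> eclosure S y -> y \is a fin_num.
Proof.
move=> hK; case: y => // H.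
- have [_ [[s Ss <-] /=]] := H _ (ereal_nbhs_pinfty_gt (num_real K)).
  rewrite lte_fin => Ks; have := hK _ Ss; have := ler_norm s; lra.
- have [_ [[s Ss <-] /=]] := H _ (ereal_nbhs_ninfty_lt (num_real (- K))).
  rewrite lte_fin => Ks; have := hK _ Ss; have := ler_norm (- s); rewrite normrN; lra.
Qed.

Lemma closure_lb {R : realType} {S : set R} {m x : R} :
  (forall y, S y -> m <= y) -> closure S x -> m <= x.
Proof.
move=> hm /closureRP hx; rewrite leNgt; apply/negP => xm.
have xm' : 0 < m - x by rewrite subr_gt0.
have [y Sy /distP [h1 h2]] := hx (m - x) xm'.
have := hm _ Sy; lra.
Qed.

Lemma closure_ub {R : realType} {S : set R} {M x : R} :
  (forall y, S y -> y <= M) -> closure S x -> x <= M.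
Proof.
move=> hm /closureRP hx; rewrite leNgt; apply/negP => xm.
have xm' : 0 < x - M by rewrite subr_gt0.
have [y Sy /distP [h1 h2]] := hx (x - M) xm'.
have := hm _ Sy; lra.
Qed.

Definition convexR {R : realType} (S : set R) :=
  forall a b c, S a -> S c -> a < b -> b < c -> S b.

Lemma closure_convex {R : realType} {S : set R} (hS : convexR S) {a b c : R} :
  closure S a -> closure S c -> a < b -> b < c -> closure S b.
Proof.
move=> /closureRP ha /closureRP hc ab bc.
have e1 : 0 < b - a by rewrite subr_gt0.
have e2 : 0 < c - b by rewrite subr_gt0.
have [a' Sa /distP [h1 h2]] := ha _ e1.
have [c' Sc /distP [h3 h4]] := hc _ e2.
apply: subset_closure; apply: (hS a' b c') => //; lra.
Qed.

Lemma einf_finP {R : realType} {S : set R} {m : R} :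
  einf S = m%:E -> (forall s, S s -> m <= s) /\ closure S m.
Proof.
move=> e; split.
- move=> s Ss; have := ereal_inf_lbound (S:=[set x%:E | x in S]) (ex_intro2 _ _ s Ss erefl).
  by rewrite -/(einf S) e lee_fin.
- apply/closureRP => eps eps0.
  have : (ereal_inf [set x%:E | x in S] < (m + eps)%:E)%E.
    by rewrite -/(einf S) e lte_fin; lra.
  move=> /ereal_inf_lt [_ [s Ss <-]]; rewrite lte_fin => hs.
  exists s => //.
  have := ereal_inf_lbound (S:=[set x%:E | x in S]) (ex_intro2 _ _ s Ss erefl).
  rewrite -/(einf S) e lee_fin => ms.
  rewrite ler0_norm; lra.
Qed.

Lemma esup_finP {R : realType} {S : set R} {m : R} :
  esup S = m%:E -> (forall s, S s -> s <= m) /\ closure S m.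
Proof.
move=> e; split.
- move=> s Ss; have := ereal_sup_ubound (S:=[set x%:E | x in S]) (ex_intro2 _ _ s Ss erefl).
  by rewrite -/(esup S) e lee_fin.
- apply/closureRP => eps eps0.
  have : ((m - eps)%:E < ereal_sup [set x%:E | x in S])%E.
    by rewrite -/(esup S) e lte_fin; lra.
  move=> /ereal_sup_gt [_ [s Ss <-]]; rewrite lte_fin => hs.
  exists s => //.
  have := ereal_sup_ubound (S:=[set x%:E | x in S]) (ex_intro2 _ _ s Ss erefl).
  rewrite -/(esup S) e lee_fin => ms.
  rewrite ger0_norm; lra.
Qed.

Lemma einf_Ny {R : realType} {S : set R} :
  einf S = -oo%E -> forall x, exists2 y, S y & y < x.
Proof.
move=> e x; have : (ereal_inf [set x%:E | x in S] < x%:E)%E by rewrite -/(einf S) e ltNyr.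
by move=> /ereal_inf_lt [_ [s Ss <-]]; rewrite lte_fin => hs; exists s.
Qed.

Lemma einf_y {R : realType} {S : set R} :
  einf S = +oo%E -> forall x, ~ S x.
Proof.
move=> e x Sx; have := ereal_inf_lbound (S:=[set x%:E | x in S]) (ex_intro2 _ _ x Sx erefl).
by rewrite -/(einf S) e.
Qed.

Lemma bdd_fin {R : realType} {S : set R} {K : R} :
  S !=set0 -> (forall s, S s -> `|s| <= K) ->
  (exists m, einf S = m%:E) /\ (exists M, esup S = M%:E).
Proof.
move=> [s0 Ss0] hK; split.
- case E: (einf S) => [m| |]; first by exists m.
  + by have := einf_y E s0 Ss0.
  + have [y Sy hy] := einf_Ny E (- K - 1); have := hK _ Sy.
    have := ler_norm (- y); rewrite normrN; lra.
- case E: (esup S) => [m| |]; first by exists m.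
  + have : ((K + 1)%:E < ereal_sup [set x%:E | x in S])%E by rewrite -/(esup S) E ltry.
    move=> /ereal_sup_gt [_ [s Ss <-]]; rewrite lte_fin => hs.
    have := hK _ Ss; have := ler_norm s; lra.
  + have := ereal_sup_ubound (S:=[set x%:E | x in S]) (ex_intro2 _ _ s0 Ss0 erefl).
    by rewrite -/(esup S) E.
Qed.

Lemma inf_not_fin (R : realType) (r : R) (y : \bar R) : r != 0 ->
  (y = +oo \/ y = -oo)%E -> (r%:E * y)%E \is a fin_num -> False.
Proof.
move=> r0 hy; have [rn|rp|re] := ltgtP r 0; last by move: r0; rewrite re eqxx.
- have rn' : (r%:E < 0)%E by rewrite lte_fin.
  by case: hy => ->; [rewrite lt0_muley | rewrite lt0_muleNy].
- have rp' : (0 < r%:E)%E by rewrite lte_fin.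
  by case: hy => ->; [rewrite gt0_muley | rewrite gt0_muleNy].
Qed.

Lemma lin_pos (R : realType) (a q u v : R) : 0 < q -> (a - q*u <= a - q*v) = (v <= u).
Proof. by move=> q0; rewrite lerD2l lerN2 ler_pM2l. Qed.
Lemma lin_neg (R : realType) (a q u v : R) : q < 0 -> (a - q*u <= a - q*v) = (u <= v).
Proof. by move=> q0; rewrite lerD2l lerN2 ler_nM2l. Qed.

Lemma core (R : realType) (SA SB : set R) (t k K : R) :
  t != 0 -> k != 0 -> convexR SA -> convexR SB -> SB !=set0 ->
  (forall s, SB s -> `|s| <= K) ->
  (exists x b, [/\ closure SA x, closure SB b & (x + t^+2) * k + b * t^+2 = 0]) <->
  [\/ eclosure SA ((- t ^+ 2)%:E - ((t ^+ 2 / k)%:E * einf SB))%E,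
      eclosure SA ((- t ^+ 2)%:E - ((t ^+ 2 / k)%:E * esup SB))%E |
      eclosure SB ((- (k / t ^+ 2))%:E * ((t ^+ 2)%:E + einf SA))%E].
Proof.
move=> t0 k0 cA cB neB hK.
have [[m em] [M eM]] := bdd_fin neB hK.
have [mlb mcl] := einf_finP em; have [Mub Mcl] := esup_finP eM.
rewrite em eM -!EFinM -!EFinB.
set q := t^+2/k.
have t20 : t^+2 != 0 by rewrite sqrf_eq0.
have q0 : q != 0 by rewrite mulf_neq0 ?invr_eq0.
have key : forall x b, ((x + t^+2) * k + b * t^+2 = 0) <-> x = - t^+2 - q * b.
  move=> x b; split => [h|->]; last by rewrite /q; field.
  have e : x = ((x + t^+2) * k + b * t^+2) / k - t^+2 - t^+2/k*b by field.
  by rewrite {1}e h /q; ring.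
have gs : forall s, s = - t^+2 - q * (- (k / t ^+ 2) * (t ^+ 2 + s)).
  by move=> s; rewrite /q; field; rewrite t0 k0.
split.
- move=> [x [b [hx hb /key ex]]].
  have bm : m <= b := closure_lb mlb hb.
  have bM : b <= M := closure_ub Mub hb.
  case: (pselect (closure SA (- t^+2 - q * m))) => [h|nm]; first by constructor 1; apply/eclosureP.
  case: (pselect (closure SA (- t^+2 - q * M))) => [h|nM]; first by constructor 2; apply/eclosureP.
  constructor 3.
  have claim : forall lo hi, ~ closure SA lo -> ~ closure SA hi -> lo <= x <= hi ->
      (forall s, lo <= s <= hi -> m <= - (k / t ^+ 2) * (t ^+ 2 + s) <= M) ->
      eclosure SB ((- (k / t ^+ 2))%:E * ((t ^+ 2)%:E + einf SA))%E.
    move=> lo hi nlo nhi /andP [lox xhi] hg.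
    have lox' : lo < x.
      by rewrite lt_neqAle lox andbT; apply/eqP => ex'; apply: nlo; rewrite ex'.
    case E: (einf SA) => [s| |].
    + have [slb scl] := einf_finP E.
      have sx : s <= x := closure_lb slb hx.
      have los : lo <= s.
        rewrite leNgt; apply/negP => slo; apply: nlo.
        exact: (closure_convex cA scl hx slo lox').
      have /andP [g1 g2] := hg s (introT andP (conj los (le_trans sx xhi))).
      rewrite -EFinD -EFinM eclosureP.
      move: g1; rewrite le_eqVlt => /orP [/eqP <- //|g1].
      move: g2; rewrite le_eqVlt => /orP [/eqP -> //|g2].
      exact: (closure_convex cB mcl Mcl g1 g2).
    + have [y Sy _] := (@closureRP _ SA x).1 hx 1 ltr01.
      by exfalso; apply: (einf_y E y Sy).
    + have [y Sy ylo] := einf_Ny E lo.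
      exfalso; apply: nlo; exact: (closure_convex cA (subset_closure Sy) hx ylo lox').
  have [qp|qn|qe] := ltgtP 0 q.
  + apply: (claim (- t^+2 - q * M) (- t^+2 - q * m)) => //.
      rewrite ex !(lin_pos _ _ _ _ _ qp); exact/andP.
    move=> s /andP [h1 h2]; rewrite (gs s) !(lin_pos _ _ _ _ _ qp) in h1 h2.
    by rewrite h1 h2.
  + apply: (claim (- t^+2 - q * m) (- t^+2 - q * M)) => //.
      rewrite ex !(lin_neg _ _ _ _ _ qn); exact/andP.
    move=> s /andP [h1 h2]; rewrite (gs s) !(lin_neg _ _ _ _ _ qn) in h1 h2.
    by rewrite h1 h2.
  + by move: q0; rewrite -qe eqxx.
- case.
  + move=> /eclosureP h; exists (- t^+2 - q * m), m; split => //; exact/key.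
  + move=> /eclosureP h; exists (- t^+2 - q * M), M; split => //; exact/key.
  + case E: (einf SA) => [s| |] H3.
    * move: H3; rewrite -EFinD -EFinM eclosureP => H3.
      have [_ scl] := einf_finP E.
      exists s, (- (k / t ^+ 2) * (t ^+ 2 + s)); split => //; field.
      exact: t0.
    * exfalso; apply: (@inf_not_fin R (- (k / t ^+ 2)) ((t ^+ 2)%:E + +oo)%E).
      - by rewrite oppr_eq0 mulf_neq0 ?invr_eq0.
      - by left; rewrite addey.
      - exact: (eclosure_fin hK H3).
    * exfalso; apply: (@inf_not_fin R (- (k / t ^+ 2)) ((t ^+ 2)%:E + -oo)%E).
      - by rewrite oppr_eq0 mulf_neq0 ?invr_eq0.
      - by right.
      - exact: (eclosure_fin hK H3).
Qed.

Lemma alg_expand (R : realType) (s r r1 r2 : R) (p n : R[i]) :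
  (1 - s)%:C * ((1 - s)%:C * r1%:C) + (1 - s)%:C * (s%:C * p) +
  (s%:C * ((1 - s)%:C * Num.conj p) + s%:C * (s%:C * r2%:C)) -
  r%:C *
  ((1 - s)%:C * ((1 - s)%:C * 1) + (1 - s)%:C * (s%:C * n) +
   (s%:C * ((1 - s)%:C * Num.conj n) + s%:C * (s%:C * 1))) =
  ((1-s)^+2 * (r1 - r) + s^+2 * (r2 - r) +
   s * (1 - s) * (2 * complex.Re p - r * (2 * complex.Re n)))%:C.
Proof.
case: p => p1 p2; case: n => n1 n2.
apply/eqP; rewrite eq_complex /=; simpc; rewrite /=.
by apply/andP; split; apply/eqP; ring.
Qed.

Lemma bound_aux (R : realType) (r q L : R) : 1 <= L -> 0 <= q -> q <= (L-1)^+2 ->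
  (forall l, 0 <= 1 + 2 * l * r + l ^+ 2 * q) -> `|r| <= L.
Proof.
move=> L1 q0 qL H.
have L0 : 0 < L by lra.
have key : forall l, 0 <= L^+2 - 2 * l * L * r + l^+2 * q.
  move=> l; have := H (- l / L).
  have -> : 1 + 2 * (- l / L) * r + (- l / L) ^+ 2 * q = (L^+2 - 2 * l * L * r + l^+2 * q) / L^+2.
    by field; rewrite gt_eqF.
  by rewrite pmulr_lge0 // invr_gt0 exprn_gt0.
have h1 := key 1; have h2 := key (-1).
rewrite ler_norml; apply/andP; split; nra.
Qed.

Section IP.
Variables (R : realType) (V : lmodType R[i]) (ip : V -> V -> R[i]).
Hypothesis hH : is_hilbert_space ip.

Lemma ipL a x y z : ip (a *: x + y) z = a * ip x z + ip y z.
Proof. by case: hH. Qed.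
Lemma ipC x y : ip y x = (ip x y)^*.
Proof. by case: hH. Qed.
Lemma ipP x : x != 0 -> 0 < ip x x.
Proof. by case: hH => _ _ h _; exact: h. Qed.

Lemma ip0l z : ip 0 z = 0.
Proof.
have h := ipL 1 0 0 z; rewrite scaler0 addr0 mul1r in h.
by have := congr1 (fun u => u - ip 0 z) h; rewrite subrr addrK.
Qed.
Lemma ipDl x y z : ip (x + y) z = ip x z + ip y z.
Proof. by have := ipL 1 x y z; rewrite scale1r mul1r. Qed.
Lemma ipZl a x z : ip (a *: x) z = a * ip x z.
Proof. by have := ipL a x 0 z; rewrite addr0 ip0l addr0. Qed.
Lemma ipDr x y z : ip z (x + y) = ip z x + ip z y.
Proof. by rewrite !(ipC _ z) ipDl rmorphD. Qed.
Lemma ipZr a x z : ip z (a *: x) = a^* * ip z x.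
Proof. by rewrite !(ipC _ z) ipZl rmorphM. Qed.
Lemma ip0r z : ip z 0 = 0.
Proof. by rewrite ipC ip0l conjc0. Qed.
Lemma conjR (c : R) : Num.conj (c%:C) = c%:C.
Proof. exact: conjc_real. Qed.
Lemma ipRR (c : R) u v : ip (c%:C *: u) (c%:C *: v) = (c ^+ 2)%:C * ip u v.
Proof.
rewrite ipZl ipZr conjR mulrA -rmorphM expr2 //.
Qed.
Lemma ip_ge0 x : 0 <= ip x x.
Proof.
have [->|x0] := eqVneq x 0; first by rewrite ip0l.
by rewrite le_eqVlt ipP ?orbT.
Qed.

Variables (D : set V) (A : V -> V).
Hypotheses (hD0 : D 0) (hDc : forall a x y, D x -> D y -> D (a *: x + y))
 (hAl : forall a x y, D x -> D y -> A (a *: x + y) = a *: A x + A y)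
 (hAs : forall x y, D x -> D y -> ip (A x) y = ip x (A y)).

Lemma DZ a x : D x -> D (a *: x).
Proof. by move=> Dx; have := hDc a x 0 Dx hD0; rewrite addr0. Qed.
Lemma DD x y : D x -> D y -> D (x + y).
Proof. by move=> Dx Dy; have := hDc 1 x y Dx Dy; rewrite scale1r. Qed.
Lemma A0 : A 0 = 0.
Proof.
have := hAl 1 0 0 hD0 hD0; rewrite scaler0 addr0 scale1r => h.
by have := congr1 (fun u => u - A 0) h; rewrite subrr addrK.
Qed.
Lemma AZ a x : D x -> A (a *: x) = a *: A x.
Proof. by move=> Dx; have := hAl a x 0 Dx hD0; rewrite !addr0 A0 addr0. Qed.
Lemma AD x y : D x -> D y -> A (x + y) = A x + A y.
Proof. by move=> Dx Dy; have := hAl 1 x y Dx Dy; rewrite !scale1r. Qed.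

Lemma numrange_convex : convexR (numrange ip D A).
Proof.
move=> r1 r r2 [x [Dx nx qx]] [y [Dy ny qy]] r1r rr2.
set p := ip (A x) y; set n := ip x y.
set z := fun s : R => (1 - s)%:C *: x + s%:C *: y.
have Dz s : D (z s) by apply: DD; apply: DZ.
have Az s : A (z s) = (1 - s)%:C *: A x + s%:C *: A y.
  by rewrite /z AD ?AZ //; apply: DZ.
set P := fun s : R => (1-s)^+2 * (r1 - r) + s^+2 * (r2 - r) +
   s * (1 - s) * (2 * complex.Re p - r * (2 * complex.Re n)).
have hP s : ip (A (z s)) (z s) - r%:C * ip (z s) (z s) = (P s)%:C.
  rewrite Az /z !(ipDl, ipDr, ipZl, ipZr) !conjR qx nx ny qy.
  rewrite (hAs y x Dy Dx) (ipC (A x) y) -/p (ipC x y) -/n.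
  exact: alg_expand.
have cP : continuous P.
  move=> s; rewrite /P.
  apply: cvgD; first apply: cvgD.
  - apply: cvgM; first apply: cvgM; do ?[exact: cvg_cst|exact: cvg_id|apply: cvgB].
  - apply: cvgM; first apply: cvgM; do ?[exact: cvg_cst|exact: cvg_id|apply: cvgB].
  - apply: cvgM; first apply: cvgM; do ?[exact: cvg_cst|exact: cvg_id|apply: cvgB].
have P0 : P 0 = r1 - r by rewrite /P; ring.
have P1 : P 1 = r2 - r by rewrite /P; ring.
have [s0 s01 Ps0] : exists2 s0, s0 \in `[0, 1] & P s0 = 0.
  apply: IVT => //; first exact: continuous_subspaceT.
  rewrite P0 P1; apply/andP; split.
  + by rewrite ge_min; apply/orP; left; rewrite subr_le0 ltW.
  + by rewrite le_max; apply/orP; right; rewrite subr_ge0 ltW.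
set z0 := z s0.
have Dz0 : D z0 := Dz s0.
have Az0 : ip (A z0) z0 = r%:C * ip z0 z0.
  by apply/eqP; rewrite -subr_eq0 hP Ps0.
have z0n : z0 != 0.
  apply/eqP => h.
  have hxy : (1 - s0)%:C *: x = (- s0)%:C *: y.
    by move/eqP: h; rewrite /z0 /z addr_eq0 => /eqP ->; rewrite rmorphN scaleNr.
  have e1 := congr1 (fun v => ip (A v) v) hxy; rewrite /= !AZ // !ipRR qx qy in e1.
  have e2 := congr1 (fun v => ip v v) hxy; rewrite /= !ipRR nx ny in e2.
  move: e1 e2; rewrite -!rmorphM !mulr1 => /complexI e1 /complexI e2.
  rewrite sqrrN in e1 e2.
  have h3 : s0 ^+ 2 * (r2 - r1) = 0 by rewrite mulrBr -e1 -e2 subrr.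
  move/eqP: h3; rewrite mulf_eq0 sqrf_eq0 subr_eq0 => /orP [/eqP s00|/eqP r21].
  + by move: e2; rewrite s00 subr0 expr1n expr0n /= => /eqP; rewrite oner_eq0.
  + by move: r1r rr2; rewrite r21 => a b; have := lt_trans a b; rewrite ltxx.
have Npos : 0 < ip z0 z0 := ipP z0 z0n.
have [NR nn0] : ip z0 z0 = (complex.Re (ip z0 z0))%:C /\ 0 < complex.Re (ip z0 z0).
  move: Npos; case: (ip z0 z0) => a b; rewrite ltcE /= => /andP [/eqP hb ha].
  by rewrite hb; split.
set nn := complex.Re (ip z0 z0) in NR nn0.
exists ((Num.sqrt nn)^-1%:C *: z0); split.
- by apply: DZ; apply: Dz.
- rewrite ipRR NR -rmorphM exprVn sqr_sqrtr ?ltW // mulVf //.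
  by rewrite gt_eqF.
- rewrite AZ // ipRR Az0 NR mulrA -!rmorphM; congr (_%:C).
  rewrite exprVn sqr_sqrtr ?ltW //; field; by rewrite gt_eqF.
Qed.


Lemma real_of_conj (w : R[i]) : w = Num.conj w -> w = (complex.Re w)%:C.
Proof.
case: w => a b /= /eqP; rewrite eq_complex /= => /andP [_ /eqP h].
have -> : b = 0 by lra.
by [].
Qed.

Lemma numrange_B (B : V -> V) : is_bounded_selfadjoint ip B ->
  (exists x, B x != 0) ->
  (numrange ip setT B !=set0) /\
  exists K, forall r, numrange ip setT B r -> `|r| <= K.
Proof.
case=> hBl [M hM] hBs [x0 Bx0].
have B0 : B 0 = 0.
  have := hBl 1 0 0; rewrite scaler0 addr0 scale1r => h.
  by have := congr1 (fun u => u - B 0) h; rewrite subrr addrK.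
have BZ a x : B (a *: x) = a *: B x by have := hBl a x 0; rewrite !addr0 B0 addr0.
split.
- have x00 : x0 != 0 by apply: contraNneq Bx0 => ->; rewrite B0.
  have Npos : 0 < ip x0 x0 := ipP x0 x00.
  have [NR nn0] : ip x0 x0 = (complex.Re (ip x0 x0))%:C /\ 0 < complex.Re (ip x0 x0).
    move: Npos; case: (ip x0 x0) => a b; rewrite ltcE /= => /andP [/eqP hb ha].
    by rewrite hb; split.
  set nn := complex.Re (ip x0 x0) in NR nn0.
  set u := (Num.sqrt nn)^-1%:C *: x0.
  exists (complex.Re (ip (B u) u)), u; split => //.
  + rewrite ipRR NR -rmorphM exprVn sqr_sqrtr ?ltW // mulVf //.
    by rewrite gt_eqF.
  + apply: real_of_conj; have := ipC (B u) u; rewrite -hBs => h; exact: h.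
- exists (`|M| + 1) => r [x [_ nx qx]].
  have key : forall l : R, 0 <= 1 + 2 * l * r + l ^+ 2 * complex.Re (ip (B x) (B x)).
    move=> l; have := ip_ge0 (x + l%:C *: B x).
    rewrite !(ipDl, ipDr, ipZl, ipZr) conjR nx qx -hBs qx.
    case: (ip (B x) (B x)) => q1 q2; rewrite lecE /= => /andP [_].
    simpc; rewrite /= => h.
    have e : 1 + 2 * l * r + l ^+ 2 * q1 = 1 + l * r + (l * r + l * (l * q1)) by ring.
    by rewrite e.
  apply: (@bound_aux R r (complex.Re (ip (B x) (B x))) (`|M| + 1)); last exact: key.
  - by rewrite lerDr.
  - by have := ip_ge0 (B x); rewrite lecE => /andP [_].
  - rewrite addrK real_normK ?num_real //.
    have := hM x; rewrite /hnorm nx /= sqrtr1 mulr1 => h.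
    have q0 : 0 <= complex.Re (ip (B x) (B x)).
      by have := ip_ge0 (B x); rewrite lecE => /andP [_].
    have := sqr_sqrtr q0; have := sqrtr_ge0 (complex.Re (ip (B x) (B x))).
    move: h; set s := Num.sqrt _; set q := complex.Re _ => h1 h2 h3.
    rewrite -h3; nra.
Qed.
End IP.

Lemma psqrt_neg (R : realType) (w : R) : psqrt (- w ^+ 2) = 'i * (`|w|)%:C.
Proof.
rewrite /psqrt; case: ifP => h.
- have w0 : w = 0.
    apply/eqP; rewrite -sqrf_eq0 eq_le sqr_ge0 andbT.
    by rewrite -oppr_ge0.
  by rewrite w0 expr0n /= oppr0 sqrtr0 normr0 mulr0.
- by rewrite opprK sqrtr_sqr.
Qed.

Lemma k_neq0 (R : realType) (c d t : R) :
  'i * t%:C != delta_p c d -> 'i * t%:C != delta_m c d -> c + d * t + t ^+ 2 != 0.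
Proof.
move=> hp hm; apply/eqP => hk.
have he : c - d ^+ 2 / 4%:R = - (t + d / 2%:R) ^+ 2.
  have -> : c = - (d * t) - t ^+ 2 by lra.
  by field.
move: hp hm; rewrite /delta_p /delta_m he psqrt_neg.
have [w0|w0] := lerP 0 (t + d / 2%:R).
- rewrite ger0_norm // => hp _; apply/negP: hp; rewrite negbK; apply/eqP.
  by rewrite -mulrBr -rmorphB; congr (_ * _%:C); field.
- rewrite ltr0_norm // => _ hm; apply/negP: hm; rewrite negbK; apply/eqP.
  by rewrite -mulrN -mulrBr -rmorphN -rmorphB; congr (_ * _%:C); field.

Qed.

Theorem proposition2p4 (R : realType) (V : lmodType R[i]) (ip : V -> V -> R[i])
    (DA : set V) (A : V -> V) (B : V -> V) (c d t : R)
    (hH : is_hilbert_space ip)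
    (hA : is_selfadjoint ip DA A)
    (hB : is_bounded_selfadjoint ip B)
    (hB0 : exists x : V, B x != 0)
    (hc : 0 <= c) (hd : 0 < d)
    (hw0 : 'i * t%:C != 0)
    (hwp : 'i * t%:C != delta_p c d)
    (hwm : 'i * t%:C != delta_m c d) :
  let WA := numrange ip DA A in
  let WB := numrange ip setT B in
  let k := c + d * t + t ^+ 2 in
  WOmega c d WA WB (Some ('i * t%:C)) <->
  [\/ eclosure WA ((- t ^+ 2)%:E - ((t ^+ 2 / k)%:E * einf WB))%E,
      eclosure WA ((- t ^+ 2)%:E - ((t ^+ 2 / k)%:E * esup WB))%E |
      eclosure WB ((- (k / t ^+ 2))%:E * ((t ^+ 2)%:E + einf WA))%E].
Proof.
move=> WA WB k.
have t0 : t != 0 by apply: contraNneq hw0 => ->; rewrite mulr0.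
have k0 : k != 0 := @k_neq0 R c d t hwp hwm.
case: hA => hD0 hDc hAl hdense hadj.
have hAs : forall x y, DA x -> DA y -> ip (A x) y = ip x (A y).
  by move=> x y Dx Dy; apply: ((hadj y (A y)).2 (conj Dy erefl)).
have cA := @numrange_convex R V ip hH DA A hD0 hDc hAl hAs.
have [hBl _ hBs] := hB.
have cB := @numrange_convex R V ip hH setT B I (fun _ _ _ _ _ => I)
  (fun a x y _ _ => hBl a x y) (fun x y _ _ => hBs x y).
have [neB [K hK]] := @numrange_B R V ip hH B hB hB0.
apply: iff_trans (@womegaP R c d WA WB t k0) _.
exact: (@core R WA WB t k K t0 k0 cA cB neB hK).
Qed.
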